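(* For any admissible pair $(r,a)$ and every $i=0,\dots,r-1$, the divisor $X_i-E_1$ on the Danilov resolution of $\frac1r(1,a,r-a)$ is effective.
   Context: Notation: for integers $s$ and $t>0$, $\langle s\rangle_t$ is the least non-negative integer congruent to $s$ modulo $t$. A pair of integers $(r,a)$ is admissible if $r\ge1$, $0\le a<r$, $\gcd(r,a)=1$ (so $a=0$ only for $r=1$). For admissible $(r,a)$ put $N(r,a)=\mathbb Z^3+\mathbb Z\cdot\frac1r(1,a,r-a)\subset\mathbb Q^3$; $e_1,e_2,e_3$ is the standard basis and $\Delta(r,a)$ the cone spanned by $e_1,e_2,e_3$. Let $b$ be an inverse of $a$ modulo $r$ and $p_i=\frac1r(\langle -ib\rangle_r,r-i,i)$, $i=0,\dots,r$ (so $p_0=e_2$, $p_r=e_3$, $p_{r-a}=\frac1r(1,a,r-a)$). For $r>1$ let $(r_L,a_L)=(r-a,\langle r\rangle_{r-a})$, $(r_R,a_R)=(a,\langle -r\rangle_a)$; there are lattice isomorphisms $L:N(r_L,a_L)\to N(r,a)$, $R:N(r_R,a_R)\to N(r,a)$ with $L(e_1)=e_1$, $L(e_2)=e_2$, $L(e_3)=p_{r-a}$, $R(e_1)=e_1$, $R(e_2)=p_{r-a}$, $R(e_3)=e_3$. The Danilov fan $\Sigma(r,a)$ is defined recursively: $\Sigma(1,0)$ is $\Delta(1,0)$ with its faces; for $r>1$, $\Sigma(r,a)$ consists of the cone spanned by $e_2,e_3,p_{r-a}$ with its faces, together with $L(\Sigma(r_L,a_L))$ and $R(\Sigma(r_R,a_R))$.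 The Danilov resolution $Y$ of $\frac1r(1,a,r-a)$ is the smooth toric variety of $\Sigma(r,a)$, with torus $T$; its rays are spanned by $e_1,p_0,\dots,p_r$; $D_i$ is the $T$-invariant prime divisor of the ray through $p_i$ and $E_j$ that of $e_j$. The permutation $\tau(r,a,\cdot)$ of $\{0,\dots,r-1\}$: if $a\in\{1,r-1\}$, $\tau(r,a,i)=\langle ai-1\rangle_r$; otherwise $\tau(r,a,i)=\tau(r-a,\langle r\rangle_{r-a},\langle i\rangle_{r-a})$ for $i\ge a$ and $\tau(r,a,i)=(r-a)+\tau(a,\langle -r\rangle_a,i)$ for $i<a$. With indices mod $r$, on $Y$ define $Y_{i-a}=\sum_{k=0}^{\tau(r,a,i)}D_k$, $Z_i=\sum_{k=\tau(r,a,i)+1}^{r}D_k$ ($i=0,\dots,r-1$), and $X_0,\dots,X_{r-1}$ the unique divisors with $X_0=E_1$ and $X_i+Z_{i+1}=Z_i+X_{i-a}$ for all $i$. *)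

(* Defs.v *)
From HB Require Import structures.
From mathcomp Require Import all_boot all_order all_algebra.
Set Implicit Arguments. Unset Strict Implicit. Unset Printing Implicit Defensive.
Import Order.TTheory GRing.Theory Num.Theory.

Definition admissible (r a : nat) : Prop := 0 < r /\ a < r /\ coprime r a.

(* tau(r,a,i), computed by recursion with fuel (fuel r is enough since r
   strictly decreases along the recursion).  <s>_t for s = a*i-1, -r is
   encoded with naturals: <a i - 1>_r = (a i + r - 1) %% r,
   <r>_{r-a} = r %% (r-a), <-r>_a = (a - r %% a) %% a. *)
Fixpoint tau_aux (n r a i : nat) : nat :=
  match n with
  | 0 => 0
  | n'.+1 =>
      if (a == 1) || (a == r - 1) then (a * i + r - 1) %% r
      else if a <= i then tau_aux n' (r - a) (r %% (r - a)) (i %% (r - a))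
      else (r - a) + tau_aux n' a ((a - r %% a) %% a) i
  end.

Definition tau (r a i : nat) : nat := tau_aux r r a i.

(* T-invariant Weil divisors on the Danilov resolution Y of 1/r(1,a,r-a):
   integer combinations of the prime divisors attached to the rays
   e_1 (index None) and p_0, ..., p_r (index Some k). *)
Definition ray (r : nat) := option 'I_r.+1.
Definition tdiv (r : nat) := {ffun ray r -> int}.

Definition E1 (r : nat) : tdiv r := [ffun x : ray r => Posz (x == None : nat)].
Definition Ddiv (r k : nat) : tdiv r :=
  [ffun x : ray r => Posz (x == Some (inord k) : nat)].

Definition Zdiv (r a i : nat) : tdiv r :=
  (\sum_((tau r a (i %% r)).+1 <= k < r.+1) Ddiv r k)%R.

Definition effective (r : nat) (d : tdiv r) : Prop := forall x, (0 <= d x)%R.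

Definition Xrec (r a : nat) (X : nat -> tdiv r) : Prop :=
  X 0 = E1 r /\
  forall i, i < r -> (X i + Zdiv r a i.+1)%R = (Zdiv r a i + X ((i + r - a) %% r)%N)%R.

(* Main.v *)
Require Import Defs.
From mathcomp Require Import all_boot all_order all_algebra zify.

Lemma coprime_childL r a : a < r -> coprime r a -> coprime (r - a) (r %% (r - a)).
Proof.
move=> ar cra; rewrite coprime_modr /coprime.
have E : r = (r - a) + a by lia.
have -> : gcdn (r - a) r = gcdn (r - a) ((r - a) + a) by rewrite -E.
rewrite gcdnDl gcdnC. idtac.
have -> : gcdn a (r - a) = gcdn a ((r - a) + a) by rewrite gcdnDr.
by rewrite -E gcdnC.
Qed.

Lemma coprime_childR r a : 0 < a -> coprime r a -> coprime a ((a - r %% a) %% a).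
Proof.
move=> a0 cra; rewrite coprime_modr /coprime.
have [x Hx] : exists x, x = r %% a by eauto.
rewrite -Hx.
have xa : x < a by rewrite Hx ltn_mod.
rewrite gcdnC.
have -> : gcdn (a - x) a = gcdn (a - x) ((a - x) + x) by congr gcdn; lia.
rewrite gcdnDl gcdnC. idtac.
have -> : gcdn x (a - x) = gcdn x ((a - x) + x) by rewrite gcdnDr.
have -> : a - x + x = a by lia.
by rewrite Hx gcdn_modl.
Qed.

Lemma tau_bound n : forall r a y, 0 < r -> r <= n -> a < r -> coprime r a -> y < r ->
  tau_aux n r a y < r.
Proof.
elim: n => [|n IH] r a y r0 rn ar cra yr /=; first lia.
case: ifP => [_|Hb]; first by rewrite ltn_mod.
have a0 : 0 < a.
  case: a ar cra Hb => // _; rewrite /coprime gcdn0 => /eqP ->; by [].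
case: ifP => ay.
  have : tau_aux n (r - a) (r %% (r - a)) (y %% (r - a)) < r - a.
    apply: IH; try lia; try (by rewrite ltn_mod; lia).
    exact: coprime_childL.
  lia.
have : tau_aux n a ((a - r %% a) %% a) y < a.
  apply: IH; try lia.
  exact: coprime_childR.
lia.
Qed.
Lemma modS_eq y r : y < r -> y.+1 %% r = if y.+1 == r then 0 else y.+1.
Proof. move=> yr; case: eqP => [->|h]; first by rewrite modnn. by rewrite modn_small; lia. Qed.
Lemma modA_lt x a r : x < r -> a < r -> (x + a) %% r = if x + a < r then x + a else x + a - r.
Proof.
move=> xr ar; case: ifP => h; first by rewrite modn_small.
have -> : x + a = (x + a - r) + r by lia.
by rewrite modnDr modn_small; lia.
Qed.
Lemma tau1 y r : y < r -> (1 * y + r - 1) %% r = if y == 0 then r - 1 else y - 1.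
Proof.
move=> yr; case: y yr => [|y] yr /=; first by rewrite mul1n add0n modn_small; lia.
have -> : 1 * y.+1 + r - 1 = y + r by lia.
by rewrite modnDr modn_small; lia.
Qed.
Lemma taurm1 y r : y < r -> ((r - 1) * y + r - 1) %% r = r - 1 - y.
Proof.
move=> yr; have -> : (r - 1) * y + r - 1 = y * r + (r - 1 - y) by nia.
by rewrite modnMDl modn_small; lia.
Qed.
Definition md (x y : nat) := x %% y.
Lemma md_small x d : x < d -> md x d = x. Proof. exact: modn_small. Qed.
Lemma md_addr x d : md (x + d) d = md x d. Proof. exact: modnDr. Qed.
Lemma md_nn d : md d d = 0. Proof. exact: modnn. Qed.
Lemma md_Dmr x y d : md (x + md y d) d = md (x + y) d. Proof. exact: modnDmr. Qed.
Lemma md_lt x d : 0 < d -> md x d < d. Proof. by move=> h; rewrite /md ltn_mod. Qed.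
Lemma md0 d : md 0 d = 0. Proof. exact: mod0n. Qed.

Lemma stepL r a s k (tL tR cL : nat -> nat) :
  0 < a -> 0 < s -> r = a + s -> k <= s ->
  cL 0 = 0 ->
  (forall t, t < s -> cL (md (t + md r s) s) + (tL (md (t + md r s).+1 s) < k)
        = cL t + (tL (md (t + md r s) s) < k)) ->
  let c x := cL (md x s) + ((tL (md r s) < k) && (x == r.-1)) in
  let F y := ((if a <= y then tL (md y s) else s + tR y) < k) in
  c 0 = 0 /\ forall x, x < r -> c (md (x + a) r) + F (md (x + a).+1 r) = c x + F (md (x + a) r).
Proof.
move=> a0 s0 Er ks cL0 rec c F.
have Ea : md r s = md a s by rewrite Er md_addr.
rewrite /c Ea in rec *; split.
  by rewrite md0 cL0; case: eqP => //; lia.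
have Fs : forall y, y < a -> F y = false.
  move=> y ya; rewrite /F; have -> : (a <= y) = false by lia. by apply/negP => h; lia.
move=> x xr; rewrite /F.
have [xs|xs] := ltnP x s.
  have h1 : md (x + a) r = x + a by rewrite md_small; lia.
  have R := rec x xs; rewrite md_Dmr in R.
  rewrite h1 (@md_small x s xs).
  have [e|lt] : (x + a).+1 = r \/ (x + a).+1 < r by lia.
    have h2 : md (x + a).+1 r = 0 by rewrite e md_nn.
    have h4 : md (x + md a s).+1 s = md a s.
      by rewrite -addSn md_Dmr (_ : x.+1 + a = a + s) ?md_addr; lia.
    rewrite h4 in R; rewrite h2.
    have -> : (a <= 0) = false by lia.
    have -> : (x + a == r.-1) = true by apply/eqP; lia.
    have -> : (x == r.-1) = false by apply/eqP; lia.
    have -> : (a <= x + a) = true by lia.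
    have -> : (s + tR 0 < k) = false by apply/negP => h; lia.
    rewrite /=. lia.
  have h2 : md (x + a).+1 r = (x + a).+1 by rewrite md_small.
  have h4 : md (x + md a s).+1 s = md (x + a).+1 s.
    by rewrite -!addSn md_Dmr.
  rewrite h4 in R; rewrite h2.
  have -> : (x + a == r.-1) = false by apply/eqP; lia.
  have -> : (x == r.-1) = false by apply/eqP; lia.
  have -> : (a <= x + a) = true by lia.
  have -> : (a <= (x + a).+1) = true by lia.
  rewrite /=. lia.
have h1 : md (x + a) r = x - s.
  by rewrite (_ : x + a = (x - s) + r) ?md_addr ?md_small; lia.
have h2 : md (x + a).+1 r = (x - s).+1.
  by rewrite (_ : (x + a).+1 = (x - s).+1 + r) ?md_addr ?md_small; lia.
have h3 : md x s = md (x - s) s.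
  by rewrite {1}(_ : x = (x - s) + s) ?md_addr; lia.
have Fy := Fs (x - s) ltac:(lia).
rewrite /F in Fy.
rewrite h1 h2 h3 Fy.
have -> : (x - s == r.-1) = false by apply/eqP; lia.
have [e|lt] : x = r.-1 \/ x < r.-1 by lia.
  have -> : (x == r.-1) = true by apply/eqP.
  have -> : (a <= (x - s).+1) = true by lia.
  have -> : (x - s).+1 = a by lia.
  rewrite /=. lia.
have -> : (x == r.-1) = false by apply/eqP; lia.
have -> : (a <= (x - s).+1) = false by lia.
have -> : (s + tR (x - s).+1 < k) = false by apply/negP => h; lia.
rewrite /=. lia.
Qed.

Lemma mdR x a s r : 0 < a -> r = a + s -> s <= x -> x < r ->
  md (md x a + md (a - md r a) a) a = x - s.
Proof.
move=> a0 Er xs xr; rewrite /md modnDm Er modnDl.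
have hs := divn_eq s a; have hl := ltn_pmod s a0.
have -> : x + (a - s %% a) = (s %/ a + 1) * a + (x - s).
  rewrite mulnDl mul1n; move: hs hl; move: (s %/ a * a) (s %% a) => Q m; lia.
rewrite modnMDl modn_small //; clear hs hl; lia.
Qed.

Lemma mdS y a : md y.+1 a = md (md y a).+1 a.
Proof. by rewrite /md -[y.+1]addn1 -[(y %% a).+1]addn1 modnDml. Qed.

Lemma stepR r a s k (tL tR cR : nat -> nat) :
  0 < a -> 0 < s -> r = a + s -> s < k ->
  (forall y, y < s -> tL y < s) ->
  cR 0 = 0 ->
  (forall t, t < a -> cR (md (t + md (a - md r a) a) a) + (tR (md (t + md (a - md r a) a).+1 a) < k - s)
        = cR t + (tR (md (t + md (a - md r a) a) a) < k - s)) ->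
  let c x := cR (md x a) + ((~~ (tR 0 < k - s)) && (x == r.-1)) in
  let F y := ((if a <= y then tL (md y s) else s + tR y) < k) in
  c 0 = 0 /\ forall x, x < r -> c (md (x + a) r) + F (md (x + a).+1 r) = c x + F (md (x + a) r).
Proof.
move=> a0 s0 Er ks tLb cR0 rec c F; rewrite /c.
split.
  by rewrite md0 cR0; case: eqP => //; lia.
have Ft : forall y, a <= y -> F y = true.
  move=> y ya; rewrite /F ya.
  have := tLb (md y s) (@md_lt y s s0). lia.
have Fj : forall y, y < a -> F y = (tR y < k - s).
  move=> y ya; rewrite /F; have -> : (a <= y) = false by lia.
  apply/idP/idP; lia.
move=> x xr.
have [xs|xs] := ltnP x s.
  have h1 : md (x + a) r = x + a by rewrite md_small; lia.
  rewrite h1 md_addr (Ft (x + a)); last by lia.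
  have -> : (x == r.-1) = false by apply/eqP; lia.
  have [e|lt] : (x + a).+1 = r \/ (x + a).+1 < r by lia.
    have h2 : md (x + a).+1 r = 0 by rewrite e md_nn.
    rewrite h2 (Fj 0 a0).
    have -> : (x + a == r.-1) = true by apply/eqP; lia.
    case: (tR 0 < k - s); rewrite /=; lia.
  have h2 : md (x + a).+1 r = (x + a).+1 by rewrite md_small.
  rewrite h2 (Ft (x + a).+1); last by lia.
  have -> : (x + a == r.-1) = false by apply/eqP; lia.
  rewrite /=; lia.
have h1 : md (x + a) r = x - s.
  by rewrite (_ : x + a = (x - s) + r) ?md_addr ?md_small; lia.
have h2 : md (x + a).+1 r = (x - s).+1.
  by rewrite (_ : (x + a).+1 = (x - s).+1 + r) ?md_addr ?md_small; lia.
have R := rec (md x a) (@md_lt x a a0).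
rewrite mdS (@mdR x a s r a0 Er xs xr) in R.
rewrite h1 h2 (Fj (x - s)); last by lia.
rewrite (@md_small (x - s) a) in R *; last by lia.
have -> : (x - s == r.-1) = false by apply/eqP; lia.
have [e|lt] : (x - s).+1 = a \/ (x - s).+1 < a by lia.
  rewrite e md_nn in R.
  rewrite e (Ft a) //.
  have -> : (x == r.-1) = true by apply/eqP; lia.
  move: R; case: (tR 0 < k - s); rewrite /=; lia.
rewrite md_small // in R.
rewrite (Fj (x - s).+1) //.
have -> : (x == r.-1) = false by apply/eqP; lia.
move: R; rewrite /=; lia.
Qed.

Fixpoint cA (n r a k x : nat) : nat :=
  match n with
  | 0 => 0
  | n'.+1 =>
    if (a == 1) || (a == r - 1) then
      (if a == 1 then ((0 < k) && (k <= x) : nat) else ((k < r) && (r - k <= x) : nat))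
    else if k <= r - a then
      cA n' (r - a) (r %% (r - a)) k (x %% (r - a))
      + ((tau_aux n' (r - a) (r %% (r - a)) (r %% (r - a)) < k) && (x == r.-1) : nat)
    else
      cA n' a ((a - r %% a) %% a) (k - (r - a)) (x %% a)
      + ((~~ (tau_aux n' a ((a - r %% a) %% a) 0 < k - (r - a))) && (x == r.-1) : nat)
  end.

Definition F n r a k y : nat := (tau_aux n r a y < k).

Lemma base1 x r k : 1 < r -> x < r -> (0 < k <= (x + 1) %% r) + ((1 * ((x + 1).+1 %% r) + r - 1) %% r < k) =
  (0 < k <= x) + ((1 * ((x + 1) %% r) + r - 1) %% r < k).
Proof.
move=> ar xr; rewrite addn1.
have [e|lt] : x.+1 = r \/ x.+1 < r by lia.
  have h1 : x.+2 %% r = 1 by rewrite (_ : x.+2 = 1 + r); [rewrite modnDr modn_small | lia].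
  have h0 : x.+1 %% r = 0 by rewrite e modnn.
  rewrite h1 h0 !tau1 /=; lia.
have h0 : x.+1 %% r = x.+1 by rewrite modn_small.
have [e2|lt2] : x.+2 = r \/ x.+2 < r by lia.
  have h2 : x.+2 %% r = 0 by rewrite e2 modnn.
  rewrite h0 h2 !tau1 //=; lia.
have h2 : x.+2 %% r = x.+2 by rewrite modn_small.
rewrite h0 h2 !tau1 //=; lia.
Qed.

Lemma base2 x r k a : 1 < r -> a = r - 1 -> x < r -> 
  (k < r) && (r - k <= (x + a) %% r) + ((a * ((x + a).+1 %% r) + r - 1) %% r < k) = (k < r) && (r - k <= x) + ((a * ((x + a) %% r) + r - 1) %% r < k).
Proof.
move=> r1 -> xr.
case: x xr => [|x] xr.
  have h1 : (0 + (r - 1)) %% r = r - 1 by rewrite add0n modn_small; lia.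
  have h2 : (0 + (r - 1)).+1 %% r = 0 by rewrite add0n (_ : (r-1).+1 = r) ?modnn; lia.
  rewrite h1 h2 !taurm1 /=; lia.
have h1 : (x.+1 + (r - 1)) %% r = x by rewrite (_ : x.+1 + (r-1) = x + r); [rewrite modnDr modn_small | ]; lia.
have h2 : (x.+1 + (r - 1)).+1 %% r = x.+1 by rewrite (_ : (x.+1 + (r-1)).+1 = x.+1 + r); [rewrite modnDr modn_small | ]; lia.
rewrite h1 h2 !taurm1 /=; lia.
Qed.

Lemma key n : forall r a k, 0 < r -> r <= n -> a < r -> coprime r a ->
  cA n r a k 0 = 0 /\
  forall x, x < r ->
    cA n r a k ((x + a) %% r) + F n r a k ((x + a).+1 %% r)
    = cA n r a k x + F n r a k ((x + a) %% r).
Proof.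
elim: n => [|n IH] r a k r0 rn ar cra; first lia.
case Hb: ((a == 1) || (a == r - 1)).
  rewrite /F /= Hb.
  case: ifP => [/eqP a1|a1].
    subst a; split; first by lia.
    move=> x xr; exact: base1.
  have ar1 : a = r - 1 by move: Hb; rewrite a1 /= => /eqP.
  have [r1|r1] : r = 1 \/ 1 < r by lia.
    split; first by lia.
    move=> x xr; have x0 : x = 0 by lia.
    by subst; rewrite !modn1.
  split; first by lia.
  move=> x xr; exact: base2.
have a0 : 0 < a.
  case: a ar cra Hb => // _; rewrite /coprime gcdn0 => /eqP ->; by [].
have r1 : 1 < r by lia.
set s := r - a.
have Er : r = a + s by rewrite /s; lia.
have s0 : 0 < s by rewrite /s; lia.
have Ec : forall x, cA n.+1 r a k x =
   if k <= s then
      cA n s (r %% s) k (x %% s) + ((tau_aux n s (r %% s) (r %% s) < k) && (x == r.-1) : nat)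
    else
      cA n a ((a - r %% a) %% a) (k - s) (x %% a)
      + ((~~ (tau_aux n a ((a - r %% a) %% a) 0 < k - s)) && (x == r.-1) : nat).
  by move=> x; rewrite /= Hb.
have Et : forall y, tau_aux n.+1 r a y =
   if a <= y then tau_aux n s (r %% s) (y %% s) else s + tau_aux n a ((a - r %% a) %% a) y.
  by move=> y; rewrite /= Hb.
rewrite /F.
case ks: (k <= s).
  have [IH0 IH1] := IH s (r %% s) k s0 ltac:(rewrite /s; lia) ltac:(by rewrite ltn_mod) (@coprime_childL r a ar cra).
  have := @stepL r a s k (tau_aux n s (r %% s)) (tau_aux n a ((a - r %% a) %% a)) (cA n s (r %% s) k)
    a0 s0 Er ks IH0 IH1.
  cbv zeta => -[H0 H1]; split; first by rewrite Ec ks.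
  by move=> x xr; rewrite !Ec !Et ks; exact: H1.
have [IH0 IH1] := IH a ((a - r %% a) %% a) (k - s) a0 ltac:(lia) ltac:(by rewrite ltn_mod) (@coprime_childR r a a0 cra).
have tLb : forall y, y < s -> tau_aux n s (r %% s) y < s.
  move=> y ys; apply: tau_bound => //; try (rewrite /s; lia).

  exact: (@coprime_childL r a ar cra).
have := @stepR r a s k (tau_aux n s (r %% s)) (tau_aux n a ((a - r %% a) %% a)) (cA n a ((a - r %% a) %% a) (k - s))
    a0 s0 Er ltac:(lia) tLb IH0 IH1.
cbv zeta => -[H0 H1]; split; first by rewrite Ec ks.
by move=> x xr; rewrite !Ec !Et ks; exact: H1.
Qed.
Import GRing.Theory.

Lemma sumind m n (k : nat) :
  (\sum_(m <= j < n) (Posz ((k == j) : nat)))%R = (Posz ((m <= k) && (k < n) : nat)).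
Proof.
elim: n => [|n IH]; first by rewrite big_geq //; case: (m <= k); rewrite //=; lia.
case: (leqP m n) => mn.
  rewrite big_nat_recr //= IH -PoszD; congr Posz.
  case: (eqVneq k n) => [->|/eqP kn]; rewrite /=; lia.
rewrite big_geq; last by lia.
suff -> : (m <= k < n.+1) = false by []. apply/negbTE/negP => /andP[h1 h2]; lia.
Qed.

Lemma Zcoef r a i (k : 'I_r.+1) :
  Zdiv r a i (Some k) = Posz ((tau r a (i %% r) < k) : nat).
Proof.
rewrite /Zdiv sum_ffunE.
rewrite (eq_big_nat _ _ (F2 := fun j => Posz ((nat_of_ord k == j) : nat))).
  rewrite sumind (ltn_ord k) andbT; by [].
move=> j /andP [_ jr]; rewrite /Ddiv ffunE /=.
congr (Posz (nat_of_bool _)).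
apply/eqP/eqP => [[->]|<-]; first by rewrite inordK.
by congr Some; apply: val_inj; rewrite /= inordK.
Qed.

Lemma Zcoef0 r a i : Zdiv r a i None = 0%R.
Proof. by rewrite /Zdiv sum_ffunE big1 // => j _; rewrite ffunE. Qed.

Definition Xs (r a : nat) (i : nat) : tdiv r :=
  [ffun x : ray r => (match x with None => Posz 1 | Some k => Posz (cA r r a k (i %% r)) end : int)].

Lemma jmod i r a : i < r -> a < r -> ((i + r - a) %% r + a) %% r = i.
Proof.
move=> ir ar; rewrite modnDml (_ : i + r - a + a = i + r); last by lia.
by rewrite modnDr modn_small.
Qed.

Lemma Xs_rec r a : admissible r a -> Xrec a (Xs r a).
Proof.
move=> [r0 [ar cra]]; split.
  apply/ffunP => -[k|]; rewrite !ffunE //=.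
  by rewrite mod0n (@key r r a k r0 (leqnn r) ar cra).1.
move=> i ir; apply/ffunP => -[k|]; rewrite !ffunE /=.
  rewrite !Zcoef -!PoszD; congr Posz.
  set j := (i + r - a) %% r.
  have jr : j < r by rewrite ltn_mod.
  have := (@key r r a k r0 (leqnn r) ar cra).2 j jr.
  rewrite /F jmod // (modn_small jr) (modn_small ir).
  have -> : (j + a).+1 %% r = i.+1 %% r by rewrite -addn1 -modnDml jmod // addn1.
  rewrite /tau; lia.
by rewrite !Zcoef0.
Qed.

Lemma uniq_X r a (X : nat -> tdiv r) : admissible r a -> Xrec a X ->
  forall i, i < r -> X i = Xs r a i.
Proof.
move=> adm; have [r0 [ar cra]] := adm.
have [Y0 Yr] := @Xs_rec r a adm.
move=> [X0 Xr].
set D := fun i => (X i - Xs r a i)%R.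
have Dstep : forall j, j < r -> D ((j + a) %% r) = D j.
  move=> j jr.
  have ir : (j + a) %% r < r by rewrite ltn_mod.
  have h1 := Xr _ ir; have h2 := Yr _ ir.
  rewrite -addnBA ?(ltnW ar) // in h1 h2.
  have e : ((j + a) %% r + (r - a)) %% r = j.
    by rewrite modnDml (_ : j + a + (r - a) = j + r) ?modnDr ?modn_small; lia.
  rewrite e in h1 h2.
  rewrite /D; move: h1 h2; set i0 := (j + a) %% r => h1 h2.
  have -> : (X i0 - Xs r a i0)%R =
     ((X i0 + Zdiv r a i0.+1) - (Xs r a i0 + Zdiv r a i0.+1))%R.
    by rewrite opprD addrACA subrr addr0.
  by rewrite h1 h2 opprD addrACA subrr add0r.
have Dm : forall m, D ((m * a) %% r) = 0%R.
  elim=> [|m IHm]; first by rewrite mul0n mod0n /D X0 Y0 subrr.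
  rewrite mulSn addnC -modnDml Dstep //; by rewrite ltn_mod.
move=> i ir.
have [M HM] : exists M, (M * a) %% r = i.
  have [r1|r1] : r = 1 \/ 1 < r by lia.
    by exists 0; rewrite r1 modn1; lia.
  have a0 : 0 < a.
    case: a ar cra {adm Y0 Yr Xr Dstep Dm D} => // _; rewrite /coprime gcdn0 => /eqP; lia.
  case: (egcdnP r a0) => km kn Hk _.
  move: cra; rewrite coprime_sym /coprime => /eqP g1; rewrite g1 in Hk.
  exists (i * km); rewrite -mulnA Hk mulnDr muln1 mulnA modnMDl modn_small //.
apply/eqP; rewrite -subr_eq0; apply/eqP.
by rewrite -HM; exact: Dm.
Qed.

Theorem mainTheorem5 (r a : nat) (adm : admissible r a) :
  (exists X : nat -> tdiv r, Xrec a X) /\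
  (forall X : nat -> tdiv r, Xrec a X ->
     forall i, i < r -> effective (X i - E1 r)%R).
Proof.
split; first by exists (Xs r a); exact: Xs_rec.
move=> X HX i ir x.
rewrite (@uniq_X r a X adm HX i ir) !ffunE.
by case: x => [k|] //=; rewrite subr0.
Qed.
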